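(* The set of real characteristic matrices on $C^5(8)^*$ modulo left multiplication by $GL(5,\mathbb{Z}/2)$ has exactly two elements, represented by $$\begin{pmatrix}1&0&0&0&0&0&0&1\\0&1&0&0&0&1&0&1\\0&0&1&0&0&1&1&1\\0&0&0&1&0&1&1&0\\0&0&0&0&1&0&1&1\end{pmatrix}\quad\text{and}\quad\begin{pmatrix}1&0&0&0&0&0&0&1\\0&1&0&0&0&1&1&0\\0&0&1&0&0&0&1&1\\0&0&0&1&0&1&1&1\\0&0&0&0&1&1&0&1\end{pmatrix}.$$
   Context: $C^5(8)^*$ is the dual of the cyclic polytope $C^5(8)$, a simple $5$-polytope with facets $F_1,\ldots,F_8$ labeled so that five facets $F_{i_1},\ldots,F_{i_5}$ meet at a vertex iff $\{i_1,\ldots,i_5\}$ is a disjoint union of sets of the form $I_j=\{j,j+1\}\cap\{1,\ldots,8\}$, $j\in\{0,\ldots,8\}$. A real characteristic matrix on it is a $5\times 8$ matrix over $\mathbb{Z}/2$ whose columns $\boldsymbol\lambda_{i_1},\ldots,\boldsymbol\lambda_{i_5}$ have determinant $1$ whenever $F_{i_1},\ldots,F_{i_5}$ meet at a vertex; $GL(5,\mathbb{Z}/2)$ acts by left multiplication. *)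

(* Defs.v *)
From mathcomp Require Import all_boot all_order all_algebra.
Set Implicit Arguments. Unset Strict Implicit. Unset Printing Implicit Defensive.
Import GRing.Theory.
Local Open Scope ring_scope.

(* Facets F_1..F_8 are indexed by i : 'I_8, facet F_(i+1) <-> i. *)

(* I_j = {j, j+1} \cap {1,..,8}, for j in {0,..,8} (j : 'I_9). *)
Definition Iset (j : 'I_9) : {set 'I_8} :=
  [set i : 'I_8 | (i.+1 == j)%N || (i.+1 == j.+1)%N].

Definition disjoint_union_of_I (S : {set 'I_8}) : Prop :=
  exists J : {set 'I_9},
    (forall j k, j \in J -> k \in J -> j != k -> [disjoint Iset j & Iset k]) /\
    S = \bigcup_(j in J) Iset j.

Definition is_vertex (S : {set 'I_8}) : Prop :=
  #|S| = 5%N /\ disjoint_union_of_I S.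

Definition real_char_matrix (M : 'M['F_2]_(5, 8)) : Prop :=
  forall f : 'I_5 -> 'I_8, injective f -> is_vertex [set f i | i : 'I_5] ->
    \det (colsub f M) = 1.

Definition GL_equiv (M N : 'M['F_2]_(5, 8)) : Prop :=
  exists G : 'M['F_2]_5, G \in unitmx /\ N = G *m M.

Definition mx_of_rows (r : seq (seq nat)) : 'M['F_2]_(5, 8) :=
  \matrix_(i < 5, j < 8) ((nth 0%N (nth [::] r i) j)%:R : 'F_2).

Definition A1 : 'M['F_2]_(5, 8) := mx_of_rows
  [:: [:: 1; 0; 0; 0; 0; 0; 0; 1];
      [:: 0; 1; 0; 0; 0; 1; 0; 1];
      [:: 0; 0; 1; 0; 0; 1; 1; 1];
      [:: 0; 0; 0; 1; 0; 1; 1; 0];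
      [:: 0; 0; 0; 0; 1; 0; 1; 1]]%N.

Definition A2 : 'M['F_2]_(5, 8) := mx_of_rows
  [:: [:: 1; 0; 0; 0; 0; 0; 0; 1];
      [:: 0; 1; 0; 0; 0; 1; 1; 0];
      [:: 0; 0; 1; 0; 0; 0; 1; 1];
      [:: 0; 0; 0; 1; 0; 1; 1; 1];
      [:: 0; 0; 0; 0; 1; 1; 0; 1]]%N.

(* Main.v *)
Require Import Defs.
From mathcomp Require Import all_boot all_order all_algebra.
From mathcomp Require Import zify.
Set Implicit Arguments. Unset Strict Implicit. Unset Printing Implicit Defensive.
Import GRing.Theory.
Local Open Scope ring_scope.

Definition b2F (b : bool) : 'F_2 := (b%:R).

Lemma F2cases (x : 'F_2) : x = 0 \/ x = 1.
Proof. case: x => [[|[|n]] Hn]; [left|right|]; try exact: val_inj. by []. Qed.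

Lemma F2b (x : 'F_2) : x = b2F (x == 1).
Proof. by case: (F2cases x) => ->; apply/eqP; vm_compute. Qed.

Lemma b2F_add a b : b2F (a (+) b) = b2F a + b2F b.
Proof. by case: a; case: b; apply/eqP; vm_compute. Qed.
Lemma b2F_mul a b : b2F (a && b) = b2F a * b2F b.
Proof. by case: a; case: b; apply/eqP; vm_compute. Qed.
Lemma b2F_inj a b : b2F a = b2F b -> a = b.
Proof. by case: a; case: b => // /eqP; vm_compute. Qed.
Lemma b2F0 : b2F false = 0. Proof. by []. Qed.
Lemma b2F1 : b2F true = 1. Proof. by apply/eqP; vm_compute. Qed.

Definition ordm (n k : nat) : 'I_n.+1 := Ordinal (ltn_pmod k (ltn0Sn n)).
Lemma ordm_val n (i : 'I_n.+1) : ordm n i = i.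
Proof. by apply: val_inj; rewrite /= modn_small. Qed.
Lemma val_ordm n k : (k < n.+1)%N -> \val (ordm n k) = k.
Proof. by move=> H; rewrite /= modn_small. Qed.
Definition o5 (k : nat) : 'I_5 := ordm 4 k.
Definition dot5 (v c : 'I_5 -> bool) : bool :=
  (v (o5 0) && c (o5 0)) (+) (v (o5 1) && c (o5 1)) (+) (v (o5 2) && c (o5 2))
  (+) (v (o5 3) && c (o5 3)) (+) (v (o5 4) && c (o5 4)).

Lemma sum5 (R : nmodType) (F : 'I_5 -> R) :
  \sum_(i < 5) F i = F (o5 0) + F (o5 1) + F (o5 2) + F (o5 3) + F (o5 4).
Proof.
rewrite !big_ord_recr big_ord0 /o5 /=. rewrite add0r.
by repeat f_equal; apply: val_inj; rewrite val_ordm.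
Qed.

Lemma dotE m (N : 'M['F_2]_(5, m)) (v : 'rV['F_2]_5) j :
  (v *m N) 0 j = b2F (dot5 (fun i => v 0 i == 1) (fun i => N i j == 1)).
Proof.
rewrite mxE sum5 /dot5 !b2F_add !b2F_mul -!F2b. by [].
Qed.

Definition kerOK (N : 'M['F_2]_(5, 8)) (S : {set 'I_8}) :=
  forall v : 'rV['F_2]_5, (forall j, j \in S -> (v *m N) 0 j = 0) -> v = 0.

Lemma detK (N : 'M['F_2]_(5, 8)) (f : 'I_5 -> 'I_8) :
  \det (colsub f N) = 1 <-> kerOK N [set f i | i : 'I_5].
Proof.
split.
- move=> Hd v Hv.
  have Hu : colsub f N \in unitmx by rewrite unitmxE Hd unitr1.
  have Hi := row_free_inj (etrans (row_free_unit _) Hu).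
  apply: Hi; rewrite /= mul0mx mulmx_colsub; apply/matrixP => i j.
  have Hj : f j \in [set f i | i : 'I_5] by apply/imsetP; exists j.
  by move: (Hv (f j) Hj); rewrite ord1 !mxE => ->.
- move=> Hk.
  have : colsub f N \in unitmx.
    rewrite -row_free_unit; apply: inj_row_free => v Hv; apply: Hk => j /imsetP [i _ ->].
    by move: Hv; rewrite mulmx_colsub => /matrixP /(_ 0 i); rewrite !mxE.
  rewrite unitmxE unitfE; by case: (F2cases (\det (colsub f N))) => ->; rewrite ?eqxx.
Qed.

Fixpoint allL (n : nat) : seq (seq bool) :=
  if n is n'.+1 then map (cons true) (allL n') ++ map (cons false) (allL n') else [:: [::]].

Lemma mem_allL l : l \in allL (size l).
Proof.
elim: l => [|b l IH] //=; rewrite mem_cat.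
by case: b; rewrite (map_f _ IH) ?orbT.
Qed.

Lemma size_allL n l : l \in allL n -> size l = n.
Proof.
elim: n l => [|n IH] l /=; first by rewrite inE => /eqP ->.
by rewrite mem_cat => /orP [] /mapP [l' /IH <- ->].
Qed.

Definition Sset (s : seq nat) : {set 'I_8} := [set j : 'I_8 | val j \in s].

Definition kerb (col : 'I_8 -> 'I_5 -> bool) (s : seq nat) : bool :=
  all (fun vl => ~~ has id vl ||
     has (fun j => dot5 (fun i => nth false vl i) (col (ordm 7 j))) s) (allL 5).

Lemma b2F_eq1 b : (b2F b == 1) = b.
Proof. by case: b; vm_compute. Qed.

Lemma eq_dot5 v v' c c' : (forall i, v i = v' i) -> (forall i, c i = c' i) ->
  dot5 v c = dot5 v' c'.
Proof. by move=> H1 H2; rewrite /dot5 !H1 !H2. Qed.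

Lemma bridge (N : 'M['F_2]_(5, 8)) col s :
  (forall i j, N i j = b2F (col j i)) -> all (fun j => j < 8)%N s ->
  kerOK N (Sset s) <-> kerb col s.
Proof.
move=> H Hs; have HN : forall i j, (N i j == 1) = col j i.
  by move=> i j; rewrite H b2F_eq1.
split.
- move=> Hk; apply/allP => vl Hvl; have Hsz := size_allL Hvl.
  case Hh: (has id vl) => //=.
  set v : 'rV['F_2]_5 := \row_i b2F (nth false vl i).
  have Hv : forall i, (v 0 i == 1) = nth false vl i by move=> i; rewrite mxE b2F_eq1.
  apply/negPn/negP => Hn.
  have Hv0 : v = 0.
    apply: Hk => j; rewrite inE => Hj.
    rewrite dotE (@eq_dot5 _ (fun i => nth false vl i) _ (col (ordm 7 j))) //.
      case Hd: (dot5 _ _) => //; exfalso; move/negP: Hn; apply; apply/hasP; exists (val j) => //.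
    by move=> i; rewrite HN ordm_val.
  move/hasP: Hh => [b Hb Hbt].
  move: Hb => /(nthP false) [k Hk' Hkb].
  have : v 0 (inord k) = 0 by rewrite Hv0 mxE.
  rewrite mxE inordK -?Hsz // Hkb.
  by case: b Hbt {Hkb} => // _ /eqP; vm_compute.
- move=> Hk v Hv.
  set vl := [seq v 0 (o5 k) == 1 | k <- iota 0 5].
  have Hvl : vl \in allL 5 by exact: (mem_allL vl).
  have Hnth : forall i : 'I_5, nth false vl i = (v 0 i == 1).
    move=> i; rewrite (nth_map 0%N) ?size_iota // nth_iota // add0n /o5 ordm_val //.
  move/allP/(_ vl Hvl): Hk => /orP [Hh | /hasP [j Hj Hd]].
  + apply/matrixP => i k; rewrite ord1 [RHS]mxE (F2b (v 0 k)) -Hnth.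
    have Hk5 : (k < size vl)%N by rewrite size_map size_iota.
    by move/hasPn: Hh => /(_ _ (mem_nth false Hk5)) /negbTE ->.
  + have Hj8 : (j < 8)%N by move/allP: Hs => /(_ j Hj).
    have Hin : (ordm 7 j : 'I_8) \in Sset s by rewrite inE val_ordm.
    have := Hv (ordm 7 j) Hin.
    rewrite dotE (@eq_dot5 _ (fun i => nth false vl i) _ (col (ordm 7 j))) ?Hd.
      by move/eqP; vm_compute.
    by move=> i; rewrite Hnth.
    by move=> i; rewrite HN.
Qed.

Lemma cardS (S : {set 'I_8}) : #|S| = count id [seq (inord k : 'I_8) \in S | k <- iota 0 8].
Proof.
rewrite -val_enum_ord -map_comp count_map cardE /enum_mem size_filter.
rewrite (@eq_filter _ _ predT) // filter_predT.
apply: eq_count => i /=; by rewrite inord_val.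
Qed.

Lemma memU (J : {set 'I_9}) (i : 'I_8) :
  (i \in \bigcup_(j in J) Iset j) = ((inord i : 'I_9) \in J) || ((inord i.+1 : 'I_9) \in J).
Proof.
have Hi9 : (i < 9)%N by apply: leq_trans (ltn_ord i) _.
have Hi9' : (i.+1 < 9)%N by apply: (ltn_ord i).
apply/bigcupP/orP.
- move=> [j Hj]; rewrite inE => /orP [] /eqP Hij.
  + right; suff -> : (inord i.+1 : 'I_9) = j by [].
    by apply: val_inj; rewrite /= inordK.
  + left; suff -> : (inord i : 'I_9) = j by [].
    by apply: val_inj; rewrite /= inordK //; case: Hij.
- move=> [] Hj; [exists (inord i) | exists (inord i.+1)] => //; rewrite inE inordK ?eqxx ?orbT //.
Qed.

Definition VLJ : seq (seq nat * seq nat) :=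
[:: ([:: 0; 1; 2; 3; 4], [:: 0; 2; 4]); ([:: 0; 1; 2; 3; 7], [:: 1; 3; 8]); ([:: 0; 1; 2; 4; 5], [:: 0; 2; 5]); ([:: 0; 1; 2; 5; 6], [:: 0; 2; 6]); ([:: 0; 1; 2; 6; 7], [:: 0; 2; 7]); ([:: 0; 1; 3; 4; 7], [:: 1; 4; 8]); ([:: 0; 1; 4; 5; 7], [:: 1; 5; 8]); ([:: 0; 1; 5; 6; 7], [:: 1; 6; 8]); ([:: 0; 2; 3; 4; 5], [:: 0; 3; 5]); ([:: 0; 2; 3; 5; 6], [:: 0; 3; 6]); ([:: 0; 2; 3; 6; 7], [:: 0; 3; 7]); ([:: 0; 3; 4; 5; 6], [:: 0; 4; 6]); ([:: 0; 3; 4; 6; 7], [:: 0; 4; 7]); ([:: 0; 4; 5; 6; 7], [:: 0; 5; 7]); ([:: 1; 2; 3; 4; 7], [:: 2; 4; 8]); ([:: 1; 2; 4; 5; 7], [:: 2; 5; 8]); ([:: 1; 2; 5; 6; 7], [:: 2; 6; 8]); ([:: 2; 3; 4; 5; 7], [:: 3; 5; 8]); ([:: 2; 3; 5; 6; 7], [:: 3; 6; 8]); ([:: 3; 4; 5; 6; 7], [:: 4; 6; 8])]%N.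

Definition bitsN (s : seq nat) := [seq k \in s | k <- iota 0 8].
Definition sOf (jl : seq bool) := [seq nth false jl k || nth false jl k.+1 | k <- iota 0 8].
Definition nonadj (jl : seq bool) := all (fun k => ~~ (nth false jl k && nth false jl k.+1)) (iota 0 8).

Lemma BFvert : all (fun jl => nonadj jl ==> (count id (sOf jl) == 5%N) ==>
   (sOf jl \in [seq bitsN p.1 | p <- VLJ])) (allL 9).
Proof. by vm_compute. Qed.

Lemma vert_complete S : is_vertex S -> exists2 s, s \in [seq p.1 | p <- VLJ] & S = Sset s.
Proof.
move=> [Hc [J [Hdis HS]]].
pose jb k := (inord k : 'I_9) \in J.
pose jl := [seq jb k | k <- iota 0 9].
have Hnth : forall k, (k < 9)%N -> nth false jl k = jb k.
  by move=> k Hk; rewrite (nth_map 0%N) ?size_iota // nth_iota.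
have HSb : [seq (inord k : 'I_8) \in S | k <- iota 0 8] = sOf jl.
  apply/eq_in_map => k; rewrite mem_iota add0n => /andP [_ Hk].
  rewrite HS memU !Hnth // ?inordK //; exact: leq_trans Hk _.
have Hna : nonadj jl.
  apply/allP => k; rewrite mem_iota add0n => /andP [_ Hk].
  rewrite !Hnth //; last exact: leq_trans Hk _.
  apply/negP => /andP [H1 H2].
  have Hne : (inord k : 'I_9) != inord k.+1.
    apply/eqP => /(congr1 val); rewrite /= !inordK //; last exact: leq_trans Hk _.
    by move=> E; have := ltnSn k; rewrite -{2}E ltnn.
  have := Hdis _ _ H1 H2 Hne.
  move/(@disjointFr _ _ _ (inord k : 'I_8)); rewrite !inE !inordK ?eqxx ?orbT //; last exact: leq_trans Hk _.
  by move=> /(_ isT).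
have Hjl : jl \in allL 9 by have := mem_allL jl; rewrite size_map size_iota.
move/allP/(_ _ Hjl): BFvert; rewrite Hna -HSb -cardS Hc eqxx !implyTb => /mapP [p Hp Hpb].
exists p.1; first exact: map_f.
apply/setP => i; rewrite inE.
have := congr1 (fun l => nth false l i) Hpb.
rewrite /bitsN !(nth_map 0%N) ?size_iota // nth_iota // add0n inord_val => ->.
by [].
Qed.

Lemma vinord n m : (m <= n)%N -> \val (@inord n m) = m.
Proof. exact: inordK. Qed.

Lemma VLJok : all (fun p => [&& all (fun a => all (fun b => a != b.+1) p.2) p.2,
   all (fun k => (k \in p.1) == ((k \in p.2) || (k.+1 \in p.2))) (iota 0 8),
   count id (bitsN p.1) == 5, all (fun j => j < 8) p.1 & all (fun j => j < 9) p.2]%N) VLJ.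
Proof. by vm_compute. Qed.

Lemma vert_sound p : p \in VLJ -> is_vertex (Sset p.1).
Proof.
move=> Hp; move/allP/(_ _ Hp): VLJok => /and5P [Hna Hun Hcnt _ _].
split.
  rewrite cardS (_ : [seq _ | k <- iota 0 8] = bitsN p.1) ?(eqP Hcnt) //.
  apply/eq_in_map => k.
  by rewrite mem_iota add0n => /andP [_ Hk]; rewrite inE /= inordK.
exists [set k : 'I_9 | val k \in p.2]; split.
- move=> j k; rewrite !inE => Hj Hk Hjk.
  rewrite -setI_eq0; apply/eqP/setP => x; rewrite !inE.
  have H1 := allP (allP Hna _ Hj) _ Hk.
  have H2 := allP (allP Hna _ Hk) _ Hj.
  apply/negbTE/negP => /andP [/orP [] /eqP E1 /orP [] /eqP E2].
  + by move/eqP: Hjk; apply; apply: val_inj; rewrite /= -E1 -E2.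
  + by move: H1; rewrite /= -E1 -E2 eqxx.
  + by move: H2; rewrite /= -E2 -E1 eqxx.
  + by move/eqP: Hjk; apply; apply: val_inj; rewrite /=; move: E1; rewrite E2; case.
- apply/setP => i; rewrite memU !inE !vinord //; last exact: ltnW (ltn_ord i).
  by rewrite (eqP (allP Hun i _)) // mem_iota add0n ltn_ord.
Qed.

Lemma vertex_f (S : {set 'I_8}) : #|S| = 5%N ->
  exists f : 'I_5 -> 'I_8, injective f /\ [set f i | i : 'I_5] = S.
Proof.
move=> Hc; exists (fun i => enum_val (cast_ord (esym Hc) i)); split.
- by move=> i j /enum_val_inj /cast_ord_inj.
- apply/setP => x; apply/imsetP/idP.
  + by move=> [i _ ->]; apply: enum_valP.
  + move=> Hx; exists (cast_ord Hc (enum_rank_in Hx x)) => //.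
    by rewrite cast_ordK enum_rankK_in.
Qed.

Lemma rcm_iff N : real_char_matrix N <-> (forall p, p \in VLJ -> kerOK N (Sset p.1)).
Proof.
split.
- move=> Hr p Hp; have Hv := vert_sound Hp.
  have [f [Hf Himg]] := vertex_f (proj1 Hv).
  rewrite -Himg; apply/detK; apply: Hr => //; by rewrite Himg.
- move=> Hk f Hf Hv; apply/detK.
  have [s /mapP [p Hp ->] ->] := vert_complete Hv.
  exact: Hk.
Qed.

Lemma kerb_ext col col' s : (forall j i, col j i = col' j i) -> kerb col s = kerb col' s.
Proof.
move=> H; rewrite /kerb; apply: eq_all => vl; congr (_ || _); apply: eq_has => j.
by apply: eq_dot5 => // i; exact: H.
Qed.

Definition colA (rows : seq (seq nat)) (j : 'I_8) (i : 'I_5) : bool :=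
  nth 0%N (nth [::] rows i) j == 1%N.

Lemma nth_le1 (rows : seq (seq nat)) i j : all (all (fun x => x <= 1)%N) rows ->
  (nth 0 (nth [::] rows i) j <= 1)%N.
Proof.
move=> H; case: (ltnP i (size rows)) => Hi; last by rewrite (nth_default [::] Hi) nth_nil.
have /allP Hr := allP H _ (mem_nth [::] Hi).
case: (ltnP j (size (nth [::] rows i))) => Hj; last by rewrite (nth_default 0%N Hj).
exact: Hr _ (mem_nth 0%N Hj).
Qed.

Lemma mx_rowsE rows : all (all (fun x => x <= 1)%N) rows ->
  forall i j, mx_of_rows rows i j = b2F (colA rows j i).
Proof.
move=> H i j; rewrite mxE /colA.
by case: (nth 0 (nth [::] rows i) j) (nth_le1 i j H) => [|[|n]] //= _; rewrite b2F1.
Qed.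

Definition rows1 : seq (seq nat) :=
  [:: [:: 1; 0; 0; 0; 0; 0; 0; 1];
      [:: 0; 1; 0; 0; 0; 1; 0; 1];
      [:: 0; 0; 1; 0; 0; 1; 1; 1];
      [:: 0; 0; 0; 1; 0; 1; 1; 0];
      [:: 0; 0; 0; 0; 1; 0; 1; 1]]%N.
Definition rows2 : seq (seq nat) :=
  [:: [:: 1; 0; 0; 0; 0; 0; 0; 1];
      [:: 0; 1; 0; 0; 0; 1; 1; 0];
      [:: 0; 0; 1; 0; 0; 0; 1; 1];
      [:: 0; 0; 0; 1; 0; 1; 1; 1];
      [:: 0; 0; 0; 0; 1; 1; 0; 1]]%N.

Lemma A1E i j : A1 i j = b2F (colA rows1 j i).
Proof. exact: (@mx_rowsE rows1 isT). Qed.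
Lemma A2E i j : A2 i j = b2F (colA rows2 j i).
Proof. exact: (@mx_rowsE rows2 isT). Qed.

Lemma VLJ8 p : p \in VLJ -> all (fun j => j < 8)%N p.1.
Proof. by move=> Hp; move/allP/(_ _ Hp): VLJok => /and5P []. Qed.

Lemma rcmA rows : all (all (fun x => x <= 1)%N) rows ->
  all (fun p => kerb (colA rows) p.1) VLJ -> real_char_matrix (mx_of_rows rows).
Proof.
move=> H1 H2; apply/rcm_iff => p Hp.
exact: (proj2 (bridge (mx_rowsE H1) (VLJ8 Hp)) (allP H2 _ Hp)).
Qed.

Lemma rcmA1 : real_char_matrix A1.
Proof. apply: rcmA => //; by vm_compute. Qed.
Lemma rcmA2 : real_char_matrix A2.
Proof. apply: rcmA => //; by vm_compute. Qed.

Definition colOf (bs : seq bool) (j : 'I_8) (i : 'I_5) : bool :=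
  if (j < 5)%N then (val i == val j) else nth false bs ((j - 5) * 5 + i).

Definition bs1 := [seq colA rows1 (ordm 7 (5 + k %/ 5)) (ordm 4 (k %% 5)) | k <- iota 0 15].
Definition bs2 := [seq colA rows2 (ordm 7 (5 + k %/ 5)) (ordm 4 (k %% 5)) | k <- iota 0 15].

Definition table (col : 'I_8 -> 'I_5 -> bool) : seq (seq bool) :=
  [seq [seq col (ordm 7 j) (ordm 4 i) | i <- iota 0 5] | j <- iota 0 8].
Definition dotL (vl c : seq bool) : bool :=
  (nth false vl 0 && nth false c 0) (+) (nth false vl 1 && nth false c 1)
  (+) (nth false vl 2 && nth false c 2) (+) (nth false vl 3 && nth false c 3)
  (+) (nth false vl 4 && nth false c 4).
Definition kerbL (tab : seq (seq bool)) (s : seq nat) : bool :=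
  all (fun vl => ~~ has id vl || has (fun j => dotL vl (nth [::] tab j)) s) (allL 5).

Lemma kerbLE col s : all (fun j => j < 8)%N s -> kerb col s = kerbL (table col) s.
Proof.
move=> Hs; apply: eq_all => vl; congr (_ || _); apply: eq_in_has => j Hj.
have Hj8 := allP Hs j Hj.
by rewrite /table (nth_map 0%N) ?size_iota // nth_iota.
Qed.

Fixpoint allB (n : nat) (P : seq bool -> bool) : bool :=
  if n is n'.+1 then allB n' (fun l => P (true :: l)) && allB n' (fun l => P (false :: l))
  else P [::].

Lemma allBP n P l : allB n P -> size l = n -> P l.
Proof.
elim: n P l => [|n IH] P [|b l] //=.
move=> /andP [H1 H2] [Hs]; case: b.
- exact: (IH (fun l => P (true :: l)) l H1 Hs).
- exact: (IH (fun l => P (false :: l)) l H2 Hs).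
Qed.

Definition vecsO0 : seq (seq bool) :=
  flatten [seq [seq l <- allL 5 | count id l == k] | k <- iota 1 5].
Definition vecsO : seq (seq bool) := Eval vm_compute in vecsO0.
Lemma vecsOE : vecsO = vecsO0. Proof. by vm_compute. Qed.
Fixpoint allF {T : Type} (a : T -> bool) (s : seq T) : bool :=
  if s is x :: s' then (if a x then allF a s' else false) else true.
Fixpoint hasF {T : Type} (a : T -> bool) (s : seq T) : bool :=
  if s is x :: s' then (if a x then true else hasF a s') else false.
Lemma allFE T (a : T -> bool) s : allF a s = all a s.
Proof. by elim: s => //= x s ->; case: (a x). Qed.
Lemma hasFE T (a : T -> bool) s : hasF a s = has a s.
Proof. by elim: s => //= x s ->; case: (a x). Qed.

Definition kerbF (tab : seq (seq bool)) (s : seq nat) : bool :=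
  allF (fun vl => hasF (fun j => dotL vl (nth [::] tab j)) s) vecsO.

Lemma kerbL_F t s : kerbL t s -> kerbF t s.
Proof.
move=> /allP H; rewrite /kerbF allFE; apply/allP => vl; rewrite vecsOE hasFE => Hvl.
have Hm : vl \in allL 5.
  by move: Hvl => /flattenP [l /mapP [k _ ->]]; rewrite mem_filter => /andP [].
have Hh : has id vl.
  move: Hvl => /flattenP [l /mapP [k]]; rewrite mem_iota => /andP [Hk _] -> .
  rewrite mem_filter => /andP [/eqP Hc _]; rewrite has_count Hc //.
by have := H vl Hm; rewrite Hh.
Qed.

Definition VLF : seq (seq nat) :=
 [:: [:: 0; 1; 2; 3; 7]; [:: 0; 1; 2; 4; 5]; [:: 0; 1; 3; 4; 7]; [:: 0; 2; 3; 4; 5]; [:: 1; 2; 3; 4; 7];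
     [:: 0; 1; 2; 5; 6]; [:: 0; 1; 2; 6; 7]; [:: 0; 1; 4; 5; 7]; [:: 0; 2; 3; 5; 6]; [:: 0; 2; 3; 6; 7];
     [:: 0; 3; 4; 5; 6]; [:: 0; 3; 4; 6; 7]; [:: 1; 2; 4; 5; 7]; [:: 2; 3; 4; 5; 7];
     [:: 0; 1; 5; 6; 7]; [:: 0; 4; 5; 6; 7]; [:: 1; 2; 5; 6; 7]; [:: 2; 3; 5; 6; 7]; [:: 3; 4; 5; 6; 7]]%N.

Lemma VLF_sub : all (fun s => s \in [seq p.1 | p <- VLJ]) VLF.
Proof. by vm_compute. Qed.

Definition VLF3 : seq (seq nat * seq (seq bool)) :=
  [:: ([:: 7], [:: [:: false; false; false; false; true]]); ([:: 5], [:: [:: false; false; false; true; false]]); ([:: 7], [:: [:: false; false; true; false; false]]); ([:: 5], [:: [:: false; true; false; false; false]]); ([:: 7], [:: [:: true; false; false; false; false]]); ([:: 5; 6], [:: [:: false; false; false; true; false]; [:: false; false; false; false; true]; [:: false; false; false; true; true]]); ([:: 6; 7], [:: [:: false; false; false; true; false]; [:: false; false; false; false; true]; [:: false; false; false; true; true]]); ([:: 5; 7], [:: [:: false; false; true; false; false]; [:: false; false; false; true; false]; [:: false; false; true; true; false]]); ([:: 5; 6], [:: [:: false; true; false; false; false]; [:: false; false; false; false; true]; [:: false; true; false; false; true]]); ([:: 6; 7], [:: [:: false; true; false; false; false]; [:: false; false; false; false; true]; [:: false; true; false; false; true]]); ([:: 5; 6], [:: [:: false; true; false; false; false]; [:: false;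 false; true; false; false]; [:: false; true; true; false; false]]); ([:: 6; 7], [:: [:: false; true; false; false; false]; [:: false; false; true; false; false]; [:: false; true; true; false; false]]); ([:: 5; 7], [:: [:: true; false; false; false; false]; [:: false; false; false; true; false]; [:: true; false; false; true; false]]); ([:: 5; 7], [:: [:: true; false; false; false; false]; [:: false; true; false; false; false]; [:: true; true; false; false; false]]); ([:: 5; 6; 7], [:: [:: false; false; true; false; false]; [:: false; false; false; true; false]; [:: false; false; false; false; true]; [:: false; false; true; true; false]; [:: false; false; true; false; true]; [:: false; false; false; true; true]; [:: false; false; true; true; true]]); ([:: 5; 6; 7], [:: [:: false; true; false; false; false]; [:: false; false; true; false; false]; [:: false; false; false; true; false]; [:: false; true; true; false; false]; [:: false; true; false; true; false]; [:: false; false; true; true; false]; [:: false; true; true; true; false]]); ([:: 5; 6; 7], [:: [:: true; false; false; false; false]; [:: false; false; false; true; false]; [:: false; false; false; false; true]; [:: true; false; false; true; false]; [:: true; false; false; false; true]; [:: false; false; false; true; true]; [:: true; false; false; true; true]]); ([:: 5; 6; 7], [:: [:: true; false; false; false; false]; [:: false; true; false; false; false]; [:: false; false; false; false; true]; [:: true; true; false; false; false]; [:: true; false; false; false; true]; [:: false; true; false; false; true]; [:: true; true; false; false; true]]); ([:: 5; 6; 7], [:: [:: true; false; false; false; false]; [:: false; true; false; false; false]; [:: false; false; true; false; false]; [:: true; true; false; false; false]; [:: true; false; true; false; false]; [:: false; true; true; false; false]; [:: true; true; true; false; false]])]%N.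

Definition kerbR (t : seq (seq bool)) (p : seq nat * seq (seq bool)) :=
  allF (fun vl => hasF (fun j => dotL vl (nth [::] t j)) p.1) p.2.

Lemma VLF3ok : allF (fun p => hasF (fun s => ([seq j <- s | 5 <= j]%N == p.1) &&
   all (fun vl => (vl \in vecsO) && all (fun i => ~~ nth false vl i || (i \notin s)) (iota 0 5)) p.2) VLF) VLF3.
Proof. by vm_compute. Qed.

Lemma unitcol bs vl j : (j < 5)%N -> dotL vl (nth [::] (table (colOf bs)) j) = nth false vl j.
Proof.
case: j => [|[|[|[|[|j]]]]] // _;
  rewrite /table (nth_map 0%N) // nth_iota // /dotL /colOf /= ?andbT ?andbF ?addbF ?addFb //.
Qed.

Lemma kerbF_R bs s vs : all (fun vl => (vl \in vecsO) && all (fun i => ~~ nth false vl i || (i \notin s)) (iota 0 5)) vs ->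
  kerbF (table (colOf bs)) s -> kerbR (table (colOf bs)) ([seq j <- s | 5 <= j]%N, vs).
Proof.
move=> /allP Hvs; rewrite /kerbF /kerbR allFE => /allP H; rewrite allFE; apply/allP => vl Hvl.
have /andP [Hv /allP Hsup] := Hvs vl Hvl.
move: (H vl Hv); rewrite !hasFE => /hasP [j Hj Hd]; apply/hasP; exists j => //.
rewrite mem_filter Hj andbT leqNgt; apply/negP => Hj5.
move: Hd; rewrite unitcol //.
have := Hsup j; rewrite mem_iota Hj5 Hj => /(_ isT).
by case: (nth false vl j).
Qed.

Lemma BFcls : allB 15 (fun bs => let t := table (colOf bs) in
  if allF (kerbR t) VLF3 then (bs == bs1) || (bs == bs2) else true).
Proof. by vm_compute. Qed.

Definition f0 (i : 'I_5) : 'I_8 := widen_ord (isT : (5 <= 8)%N) i.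

Lemma f0_inj : injective f0.
Proof. by move=> i j H; apply: val_inj; exact: (congr1 val H). Qed.

Lemma f0_vertex : is_vertex [set f0 i | i : 'I_5].
Proof.
have -> : [set f0 i | i : 'I_5] = Sset ([:: 0; 1; 2; 3; 4]%N, [:: 0; 2; 4]%N).1.
  apply/setP => x; rewrite inE /= (_ : [:: 0; 1; 2; 3; 4]%N = iota 0 5) // mem_iota /=.
  apply/imsetP/idP => [[i _ ->] /=|Hx]; first exact: ltn_ord.
  by exists (Ordinal Hx) => //; apply: val_inj.
exact: vert_sound.
Qed.

Lemma colOK rows bs : allF (fun j => allF (fun i =>
    colOf bs (ordm 7 j) (ordm 4 i) == colA rows (ordm 7 j) (ordm 4 i)) (iota 0 5)) (iota 0 8) ->
  forall j i, colOf bs j i = colA rows j i.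
Proof.
rewrite allFE => /allP H j i.
have := H (val j); rewrite mem_iota ltn_ord allFE => /(_ isT) /allP /(_ (val i)).
by rewrite mem_iota ltn_ord ordm_val ordm_val => /(_ isT) /eqP.
Qed.

Lemma cls (N : 'M['F_2]_(5, 8)) : real_char_matrix N -> colsub f0 N = 1%:M -> N = A1 \/ N = A2.
Proof.
move=> Hr Hid.
pose col := fun j i => N i j == 1.
have HN : forall i j, N i j = b2F (col j i) by move=> i j; exact: F2b.
have Hk : forall p, p \in VLJ -> kerb col p.1.
  by move=> p Hp; exact: (proj1 (bridge HN (VLJ8 Hp)) (proj1 (rcm_iff N) Hr p Hp)).
pose bs := [seq col (ordm 7 (5 + k %/ 5)) (ordm 4 (k %% 5)) | k <- iota 0 15].
have Hcol : forall j i, col j i = colOf bs j i.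
  move=> j i; rewrite /colOf; case: ifP => Hj.
  - have E : N i (f0 (Ordinal Hj)) = (1%:M : 'M['F_2]_5) i (Ordinal Hj) by rewrite -Hid mxE.
    have Ej : j = f0 (Ordinal Hj) by apply: val_inj.
    rewrite /col Ej E mxE.
    case: (eqVneq i (Ordinal Hj)) => [->|Hne]; first by rewrite (b2F_eq1 true) /= eqxx.
    by rewrite (b2F_eq1 false) /=; apply/esym; exact: (negbTE Hne).
  - have Hj8 := ltn_ord j; have Hi5 := ltn_ord i.
    have Hj5 : (5 <= j)%N by rewrite leqNgt Hj.
    have Hlt : ((j - 5) * 5 + i < 15)%N by lia.
    rewrite (nth_map 0%N) ?size_iota // nth_iota // add0n.
    rewrite divnMDl // modnMDl divn_small // modn_small // addn0 subnKC; last by rewrite leqNgt Hj.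
    by rewrite !ordm_val.
have Hbs : size bs = 15%N by rewrite size_map size_iota.
have HallF : forall s, s \in VLF -> kerbF (table (colOf bs)) s.
  move=> s Hs.
  have /mapP [p Hp ->] := allP VLF_sub s Hs.
  by apply: kerbL_F; rewrite -kerbLE ?VLJ8 // -(kerb_ext _ Hcol); exact: Hk.
have Hall : allF (kerbR (table (colOf bs))) VLF3.
  move: VLF3ok; rewrite !allFE => /allP H3; apply/allP => p Hp.
  move: (H3 p Hp); rewrite hasFE => /hasP [s Hs /andP [/eqP Ep Hsup]].
  case: p Hp Ep Hsup {H3} => [T vs] _ /= <- Hsup.
  exact: kerbF_R Hsup (HallF s Hs).
have HB := allBP BFcls Hbs.
change (is_true (if allF (kerbR (table (colOf bs))) VLF3 then (bs == bs1) || (bs == bs2) else true)) in HB.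
move: HB; rewrite Hall => /orP [] /eqP Eb; [left|right];
  apply/matrixP => i j; rewrite HN Hcol Eb ?A1E ?A2E; congr b2F; apply: colOK; by vm_compute.
Qed.

Lemma colsub_rows rows : all (all (fun x => x <= 1)%N) rows ->
  allF (fun j => allF (fun i => colA rows (ordm 7 j) (ordm 4 i) == (i == j)) (iota 0 5)) (iota 0 5) ->
  colsub f0 (mx_of_rows rows) = 1%:M.
Proof.
move=> H1; rewrite allFE => /allP H2; apply/matrixP => i j.
rewrite mxE (mx_rowsE H1) mxE.
have := H2 (val j); rewrite mem_iota ltn_ord allFE => /(_ isT) /allP /(_ (val i)).
rewrite mem_iota ltn_ord ordm_val => /(_ isT) /eqP.
have -> : ordm 7 j = f0 j by apply: val_inj; rewrite val_ordm //; exact: leq_trans (ltn_ord j) _.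
by move=> ->.
Qed.

Theorem corollary6p4 :
  [/\ real_char_matrix A1, real_char_matrix A2,
      ~ GL_equiv A1 A2 &
      forall M : 'M['F_2]_(5, 8), real_char_matrix M ->
        GL_equiv M A1 \/ GL_equiv M A2].
Proof.
split.
- exact: rcmA1.
- exact: rcmA2.
- move=> [G [HG E]].
  have C1 : colsub f0 A1 = 1%:M by apply: colsub_rows => //; vm_compute.
  have C2 : colsub f0 A2 = 1%:M by apply: colsub_rows => //; vm_compute.
  have HG1 : G = 1%:M.
    by rewrite -[G]mulmx1 -C1 mulmx_colsub -E C2.
  move: E; rewrite HG1 mul1mx => /matrixP /(_ (ordm 4 1) (ordm 7 6)).
  rewrite A1E A2E => /b2F_inj; by vm_compute.
- move=> M Hr.
  have HB : \det (colsub f0 M) = 1 by apply: Hr; [exact: f0_inj | exact: f0_vertex].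
  have HBu : colsub f0 M \in unitmx by rewrite unitmxE HB unitr1.
  set N := invmx (colsub f0 M) *m M.
  have HNid : colsub f0 N = 1%:M by rewrite -mulmx_colsub mulVmx.
  have HNr : real_char_matrix N.
    move=> f Hf Hv; rewrite -mulmx_colsub det_mulmx det_inv (Hr f Hf Hv) HB invr1 mulr1.
    by [].
  case: (cls HNr HNid) => EN; [left|right]; exists (invmx (colsub f0 M));
    by rewrite unitmx_inv HBu -EN.
Qed.
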